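(* Let $W$ be a weakly symmetric discrete memoryless channel with input alphabet $\mathbb{F}_q$, let $\mu=\mathbb{E}(\|\pi\|^2)$, and suppose the all-zero word of length $n$ is sent through $n$ independent uses of $W$, with resulting reliability matrix $\Pi$. Then for every $\epsilon>0$, $$\mathrm{prob}\big(\langle\Pi,\lfloor\mathbf{0}\rfloor\rangle\le(1-\epsilon)\mu n\big)\le e^{-2n\mu^2\epsilon^2},\qquad \mathrm{prob}\big(\langle\Pi,\Pi\rangle\ge(1+\epsilon)n\mu\big)\le e^{-2n\mu^2\epsilon^2}.$$
   Context: A discrete memoryless channel with transition probabilities $W(y|x)$ is weakly symmetric if its output alphabet admits a partition $Y_1\cup\dots\cup Y_r$ such that each submatrix $(W(y|x))_{x\in\mathbb{F}_q,y\in Y_i}$ has all rows permutations of each other and all columns permutations of each other. The input is assumed uniform on $\mathbb{F}_q$; the APP vector of output $y$ is $\pi_y=(\mathrm{prob}(x=\alpha|y))_{\alpha\in\mathbb{F}_q}$ and $\|\pi\|^2=\sum_\alpha\pi(\alpha)^2$; $\mathbb{E}(\|\pi\|^2)$ is the expectation over the channel output. For received $\mathbf{y}=(y_1,\dots,y_n)$, the reliability matrix $\Pi$ is the $q\times n$ matrix with $j$-th column $\pi_{y_j}$. $\lfloor\mathbf{0}\rfloor$ is the $q\times n$ 0/1 matrix with ones exactly in row $0$; $\langle A,B\rangle=\sum_{i,j}a_{ij}b_{ij}$. *)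

(* Defs.v *)
From HB Require Import structures.
From mathcomp Require Import all_boot all_order all_algebra all_field.
From mathcomp Require Import reals. From mathcomp.analysis Require Import sequences exp.
Set Implicit Arguments. Unset Strict Implicit. Unset Printing Implicit Defensive.
Import Order.TTheory GRing.Theory Num.Theory.
Local Open Scope ring_scope.

Section Channel.
Variables (R : realType) (F : finFieldType) (Y : finType).

(* W x y = W(y|x) *)
Definition is_dmc (W : F -> Y -> R) : Prop :=
  (forall x y, 0 <= W x y) /\ (forall x, \sum_y W x y = 1).

Definition weakly_symmetric (W : F -> Y -> R) : Prop :=
  exists P : {set {set Y}}, partition P [set: Y] /\
    forall B, B \in P ->
      (forall x x' : F, perm_eq [seq W x y | y <- enum B] [seq W x' y | y <- enum B]) /\
      (forall y y', y \in B -> y' \in B ->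
         perm_eq [seq W x y | x <- enum F] [seq W x y' | x <- enum F]).

(* APP vector under uniform input: prob(x = a | y) *)
Definition APP (W : F -> Y -> R) (y : Y) (a : F) : R :=
  (W a y / #|F|%:R) / (\sum_b W b y / #|F|%:R).

Definition sqnorm (pi : F -> R) : R := \sum_a pi a ^+ 2.

Definition out_prob (W : F -> Y -> R) (y : Y) : R := \sum_x W x y / #|F|%:R.

Definition mu (W : F -> Y -> R) : R := \sum_y out_prob W y * sqnorm (APP W y).

Definition relmat (W : F -> Y -> R) n (y : {ffun 'I_n -> Y}) : F -> 'I_n -> R :=
  fun a j => APP W (y j) a.

Definition zero_floor n : F -> 'I_n -> R := fun a _ => if a == 0 then 1 else 0.

Definition frob n (A B : F -> 'I_n -> R) : R := \sum_a \sum_j A a j * B a j.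

Definition prob0 (W : F -> Y -> R) n (E : pred {ffun 'I_n -> Y}) : R :=
  \sum_(y : {ffun 'I_n -> Y} | E y) \prod_j W 0 (y j).

End Channel.

(* Main.v *)
Require Import Defs.
From HB Require Import structures.
From mathcomp Require Import all_boot all_order all_algebra all_field.
From mathcomp Require Import reals. From mathcomp.analysis Require Import sequences exp.
From mathcomp Require Import all_classical all_reals all_analysis.
From mathcomp Require Import ring lra.
Import Order.TTheory GRing.Theory Num.Theory.
Import numFieldNormedType.Exports.
Local Open Scope ring_scope.

Section S.
Local Open Scope classical_set_scope.
Variable R : realType.

Lemma cont_of_der (f : R -> R) (b : R) : (forall x : R, derivable f x 1) ->
  {within `]-oo, b], continuous f}.
Proof.
move=> df; apply: continuous_subspaceT => x.
exact/differentiable_continuous/derivable1_diffP.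
Qed.

Lemma hoeff_aux (m s : R) : 0 <= m -> m <= 1 -> s <= 0 ->
  1 - m + m * expR s <= expR (s * m + s ^+ 2 / 8).
Proof.
move=> m0 m1 s0.
pose D (s : R) := 1 - m + m * expR s.
have Dpos t : 0 < D t.
  rewrite /D; have [->|mne] := eqVneq m 0; first by rewrite subr0 mul0r addr0.
  have : 0 < m * expR t by rewrite mulr_gt0 ?expR_gt0 // lt_def mne.
  lra.
have dD (x : R) : is_derive x 1 D (m * expR x).
  by rewrite /D; apply: is_derive_eq; rewrite add0r mul1r.
have dDV (x : R) : is_derive x 1 (fun s => (D s)^-1) (- (D x) ^- 2 *: (m * expR x)).
  by apply: is_deriveV => //; rewrite gt_eqF.
pose G (s : R) := m * expR s * (D s)^-1 - m - s / 4.
have dG (x : R) : is_derive x 1 G (- (m * expR x / D x - 1/2) ^+ 2).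
  rewrite /G; apply: is_derive_eq.
  have := Dpos x; rewrite /D => Dx.
  rewrite -![_ *: _]/(_ * _).
  move: Dx; set E := expR x => Dx.
  field. lra.
have G00 : G 0 = 0.
  by rewrite /G /D expR0 mulr1 subrK invr1 mulr1 subrr mul0r subr0.
have G0 t : t <= 0 -> 0 <= G t.
  move=> t0; rewrite -G00.
  apply: (@ler0_derive1_nincrNy _ G 0) => //.
  - by move=> x _; rewrite derive1E; case: (dG x) => _ ->; rewrite oppr_le0 sqr_ge0.
  - by apply: cont_of_der => x; case: (dG x).
pose K (s : R) := D s * expR (- (s * m) - s ^+ 2 / 8).
have dK (x : R) : is_derive x 1 K (expR (- (x * m) - x ^+ 2 / 8) * D x * G x).
  rewrite /K; apply: is_derive_eq.
  have := Dpos x; rewrite /G /D => Dx.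
  rewrite -![_ *: _]/(_ * _).
  move: Dx; set E := expR x; set E2 := expR _ => Dx.
  field; lra.
have K00 : K 0 = 1.
  rewrite /K /D expR0 mulr1 subrK mul1r -[X in expR X]/(- (0 * m) - 0 ^+ 2 / 8).
  by rewrite mul0r expr0n /= mul0r oppr0 addr0 expR0.
have Kle : K s <= 1.
  rewrite -K00; apply: (@ger0_derive1_ndecrNy _ K 0) => //.
  - move=> x; rewrite in_itv /= => x0; rewrite derive1E; case: (dK x) => _ ->.
    apply: mulr_ge0; [apply: mulr_ge0|]; [exact: expR_ge0|exact: ltW|exact/G0/ltW].
  - by apply: (@cont_of_der K 0) => x; case: (dK x).
move: Kle; rewrite /K -/(D s) => Kle.
have -> : expR (s * m + s ^+ 2 / 8) = (expR (- (s * m) - s ^+ 2 / 8))^-1.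
  by rewrite -expRN opprB opprK addrC.
by rewrite -ler_pdivlMr ?expR_gt0 // mul1r in Kle.
Qed.

Lemma expR_conv (s x : R) : 0 <= x -> x <= 1 ->
  expR (- (s * x)) <= 1 - x + x * expR (- s).
Proof.
move=> x0 x1.
have := @convex_expR R (@Itv01 R x x0 x1) (- s) 0.
rewrite !convRE /= expR0 mulr0 addr0 mulr1 mulrN mulrC.
by rewrite addrC.
Qed.

Lemma expR_sum (I : finType) (f : I -> R) : expR (\sum_i f i) = \prod_i expR (f i).
Proof.
apply: (big_rec2 (fun a b => expR a = b)); first by rewrite expR0.
by move=> i a b _ <-; rewrite expRD.
Qed.

Lemma hoeffding (Y : finType) (p X : Y -> R) (n : nat) (d : R) :
  (forall y, 0 <= p y) -> \sum_y p y = 1 -> (forall y, 0 <= X y) -> (forall y, X y <= 1) ->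
  0 <= d ->
  \sum_(y : {ffun 'I_n -> Y} | \sum_j X (y j) <= n%:R * (\sum_y p y * X y) - n%:R * d)
     \prod_j p (y j)
  <= expR (- (2 * n%:R * d ^+ 2)).
Proof.
move=> p0 p1 X0 X1 d0.
set m := \sum_y p y * X y.
set A := n%:R * m - n%:R * d.
pose s := 4 * d.
have s0 : 0 <= s by rewrite /s mulr_ge0.
have m0 : 0 <= m by apply: sumr_ge0 => y _; rewrite mulr_ge0.
have m1 : m <= 1.
  rewrite -p1; apply: ler_sum => y _; rewrite ler_piMr //.
apply: (@le_trans _ _ (\sum_(y : {ffun 'I_n -> Y}) (\prod_j p (y j)) * expR (s * (A - \sum_j X (y j))))).
  rewrite [X in X <= _]big_mkcond /=; apply: ler_sum => y _.
  have pr0 : 0 <= \prod_j p (y j) by apply: prodr_ge0.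
  case: ifP => h.
    apply: ler_peMr => //; apply: le_trans (expR_ge1Dx _); rewrite lerDl.
    by rewrite mulr_ge0 // subr_ge0.
  by rewrite mulr_ge0 ?expR_ge0.
have -> : \sum_(y : {ffun 'I_n -> Y}) (\prod_j p (y j)) * expR (s * (A - \sum_j X (y j)))
   = expR (s * A) * (\sum_y p y * expR (- (s * X y))) ^+ n.
  rewrite -[in RHS](card_ord n) -prodr_const bigA_distr_bigA /= mulr_sumr.
  apply: eq_bigr => y _.
  rewrite mulrBr expRD mulr_sumr -sumrN expR_sum big_split /=.
  by rewrite mulrCA.
have hm : \sum_y p y * expR (- (s * X y)) <= expR (- s * m + (- s) ^+ 2 / 8).
  apply: le_trans (@hoeff_aux m (- s) m0 m1 _); last by rewrite oppr_le0.
  apply: (@le_trans _ _ (\sum_y p y * (1 - X y + X y * expR (- s)))).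
    by apply: ler_sum => y _; apply: ler_wpM2l => //; apply: expR_conv.
  rewrite (eq_bigr (fun y => p y - p y * X y + (p y * X y) * expR (- s))); last first.
    by move=> y _; ring.
  rewrite !big_split /= -!mulr_suml p1 sumrN.
  by rewrite -/m.
apply: (@le_trans _ _ (expR (s * A) * (expR (- s * m + (- s) ^+ 2 / 8)) ^+ n)).
  apply: ler_wpM2l; first exact: expR_ge0.
  apply: lerXn2r => //; rewrite nnegrE ?expR_ge0 //.
  by apply: sumr_ge0 => y _; rewrite mulr_ge0 ?expR_ge0.
rewrite -expRM_natl -expRD /A /s.
rewrite le_eqVlt; apply/orP; left; apply/eqP; congr expR; field.
by [].
Qed.
End S.

Lemma eqle (R : realType) (x y : R) : x = y -> x <= y. Proof. by move->. Qed.

Lemma prob_mono (R : realType) (Y : finType) n (E1 E2 : pred {ffun 'I_n -> Y}) (p : Y -> R) :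
  (forall y, 0 <= p y) -> (forall y, E1 y -> E2 y) ->
  \sum_(y | E1 y) \prod_j p (y j) <= \sum_(y | E2 y) \prod_j p (y j).
Proof.
move=> p0 E12; rewrite [X in X <= _]big_mkcond [X in _ <= X]big_mkcond.
apply: ler_sum => y _; case: ifP => h1; first by rewrite E12.
by case: ifP => // _; apply: prodr_ge0.
Qed.

Section Chan.
Variables (R : realType) (F : finFieldType) (Y : finType) (W : F -> Y -> R).
Hypothesis W0 : forall x y, 0 <= W x y.
Hypothesis W1 : forall x, \sum_y W x y = 1.
Variable P : {set {set Y}}.
Hypothesis Ppart : finset.partition P [set: Y]%SET.
Hypothesis Prow : forall {B}, B \in P -> forall x x' : F,
  perm_eq [seq W x y | y <- enum B] [seq W x' y | y <- enum B].
Hypothesis Pcol : forall {B}, B \in P -> forall {y y'}, y \in B -> y' \in B ->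
  perm_eq [seq W x y | x <- enum F] [seq W x y' | x <- enum F].

Let q : R := #|F|%:R.

Lemma q_gt0 : 0 < q.
Proof. by rewrite /q ltr0n; apply/card_gt0P; exists 0. Qed.

Lemma colsum_eq (h : R -> R) {B y y'} : B \in P -> y \in B -> y' \in B ->
  \sum_x h (W x y) = \sum_x h (W x y').
Proof.
move=> PB yB y'B.
transitivity (\sum_(v <- [seq W x y | x <- enum F]) h v); first by rewrite big_map big_enum.
rewrite (perm_big _ (Pcol PB yB y'B)).
by rewrite big_map big_enum.
Qed.

Lemma rowsum_eq (g : R -> R) (Phi : Y -> R) a a' :
  (forall B, B \in P -> forall y y', y \in B -> y' \in B -> Phi y = Phi y') ->
  \sum_y g (W a y) * Phi y = \sum_y g (W a' y) * Phi y.
Proof.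
move=> HPhi; case/and3P: Ppart => /eqP cov triv _.
have E (f : Y -> R) : \sum_y f y = \sum_(B in P) \sum_(y in B) f y.
  by rewrite -finset.big_trivIset // cov; apply: eq_bigl => y; rewrite inE.
rewrite !E; apply: eq_bigr => B PB.
case: (set_0Vmem B) => [->|[y0 y0B]]; first by rewrite !big_set0.
have H x : \sum_(y in B) g (W x y) * Phi y = (\sum_(y in B) g (W x y)) * Phi y0.
  by rewrite mulr_suml; apply: eq_bigr => y yB; rewrite (HPhi B PB y y0).
rewrite !H; congr (_ * _).
transitivity (\sum_(v <- [seq W a y | y <- enum B]) g v); first by rewrite big_map big_enum.
rewrite (perm_big _ (Prow PB a a')).
by rewrite big_map big_enum.
Qed.

Let outp y := out_prob W y.
Let Phi y := q^-1 / outp y.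

Lemma outp_ge0 y : 0 <= outp y.
Proof. by apply: sumr_ge0 => x _; rewrite divr_ge0 ?ler0n. Qed.

Lemma outpE y : out_prob W y = (\sum_x W x y) * q^-1.
Proof. by rewrite /out_prob mulr_suml. Qed.

Lemma APP_E y a : APP W y a = W a y * Phi y.
Proof. by rewrite /APP /Phi mulrA. Qed.

Lemma Phi_blk {B} : B \in P -> forall y y', y \in B -> y' \in B -> Phi y = Phi y'.
Proof.
move=> PB y y' yB y'B; rewrite /Phi /outp /out_prob.
by rewrite (colsum_eq (fun v => v / q) PB yB y'B).
Qed.

Let sqn y := sqnorm (APP W y).

Lemma sqn_blk {B} : B \in P -> forall y y', y \in B -> y' \in B -> sqn y = sqn y'.
Proof.
move=> PB y y' yB y'B; rewrite /sqn /sqnorm.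
under eq_bigr => a _ do rewrite APP_E (Phi_blk PB _ _ yB y'B).
under [RHS]eq_bigr => a _ do rewrite APP_E.
exact: (colsum_eq (fun v => (v * Phi y') ^+ 2) PB yB y'B).
Qed.

Lemma APP_ge0 y a : 0 <= APP W y a.
Proof. by rewrite /APP divr_ge0 ?divr_ge0 ?ler0n //; exact: outp_ge0. Qed.

Lemma sumAPP y : \sum_a APP W y a <= 1.
Proof.
under eq_bigr => a _ do rewrite APP_E.
rewrite -mulr_suml /Phi /outp mulrA -outpE.
have [->|nz] := eqVneq (out_prob W y) 0; first by rewrite mul0r ler01.
by rewrite mulfV.
Qed.

Lemma APP_le1 y a : APP W y a <= 1.
Proof.
apply: le_trans (sumAPP y); rewrite (bigD1 a) //= lerDl.
by apply: sumr_ge0 => b _; exact: APP_ge0.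
Qed.

Lemma sqn_ge0 y : 0 <= sqn y.
Proof. by apply: sumr_ge0 => a _; exact: sqr_ge0. Qed.

Lemma sqn_le1 y : sqn y <= 1.
Proof.
apply: le_trans (sumAPP y); apply: ler_sum => a _.
by rewrite expr2 ler_piMr ?APP_ge0 ?APP_le1.
Qed.

Lemma mu_ge0 : 0 <= mu W.
Proof. by apply: sumr_ge0 => y _; rewrite mulr_ge0 ?outp_ge0 ?sqn_ge0. Qed.

Lemma const_avg (c : R) : \sum_(x : F) q^-1 * c = c.
Proof.
rewrite sumr_const -mulr_natl mulrA -/q mulfV ?mul1r //.
by rewrite gt_eqF // q_gt0.
Qed.

Lemma mu_eq2 : \sum_y W 0 y * sqn y = mu W.
Proof.
rewrite /mu.
under [RHS]eq_bigr => y _ do rewrite /out_prob mulr_suml.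
rewrite [RHS]exchange_big /=.
rewrite -[LHS]const_avg; apply: eq_bigr => x _.
rewrite (@rowsum_eq id sqn 0 x (@sqn_blk)) mulr_sumr; apply: eq_bigr => y _ /=.
by rewrite mulrCA mulrA.
Qed.

Lemma outAPP y a : out_prob W y * APP W y a = W a y / q.
Proof.
rewrite APP_E /Phi /outp.
have [z|nz] := eqVneq (out_prob W y) 0.
  have : W a y / q = 0.
    apply: (psumr_eq0P (P := xpredT) (F := fun x => W x y / q)) => //.
    by move=> x _; rewrite divr_ge0 ?ler0n.
  by move=> ->; rewrite z mul0r.
have qnz : q != 0 by rewrite gt_eqF // q_gt0.
by field; rewrite nz qnz.
Qed.

Lemma mu_eq1 : \sum_y W 0 y * APP W y 0 = mu W.
Proof.
rewrite /mu.
have E y : out_prob W y * sqnorm (APP W y) = \sum_a W a y / q * APP W y a.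
  by rewrite /sqnorm mulr_sumr; apply: eq_bigr => a _; rewrite expr2 mulrA outAPP.
under [RHS]eq_bigr => y _ do rewrite E.
rewrite [RHS]exchange_big /= -[LHS]const_avg; apply: eq_bigr => a _.
have F' x : \sum_y W x y * APP W y x = \sum_y (W x y) ^+ 2 * Phi y.
  by apply: eq_bigr => y _; rewrite APP_E mulrA -expr2.
rewrite F' (@rowsum_eq (fun v => v ^+ 2) Phi 0 a (@Phi_blk)) -F' mulr_sumr.
by apply: eq_bigr => y _; rewrite mulrA [q^-1 * _]mulrC.
Qed.

Lemma frob_zero n (y : {ffun 'I_n -> Y}) :
  frob (relmat W y) (@zero_floor R F n) = \sum_j APP W (y j) 0.
Proof.
rewrite /frob exchange_big /=; apply: eq_bigr => j _.
rewrite (bigD1 0) //= /zero_floor /relmat eqxx mulr1 big1 ?addr0 //.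
by move=> a /negPf ->; rewrite mulr0.
Qed.

Lemma frob_self n (y : {ffun 'I_n -> Y}) :
  frob (relmat W y) (relmat W y) = \sum_j sqn (y j).
Proof.
rewrite /frob exchange_big /=; apply: eq_bigr => j _.
by rewrite /sqn /sqnorm; apply: eq_bigr => a _; rewrite expr2.
Qed.

Lemma main_sec n (eps : R) : 0 < eps ->
  prob0 W (fun y : {ffun 'I_n -> Y} => frob (relmat W y) (@zero_floor R F n) <= (1 - eps) * mu W * n%:R)
    <= expR (- (2 * n%:R * mu W ^+ 2 * eps ^+ 2))
  /\
  prob0 W (fun y : {ffun 'I_n -> Y} => frob (relmat W y) (relmat W y) >= (1 + eps) * n%:R * mu W)
    <= expR (- (2 * n%:R * mu W ^+ 2 * eps ^+ 2)).
Proof.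
move=> eps0.
have d0 : 0 <= eps * mu W by apply: mulr_ge0; [exact: ltW | exact: mu_ge0].
have -> : expR (- (2 * n%:R * mu W ^+ 2 * eps ^+ 2)) = expR (- (2 * n%:R * (eps * mu W) ^+ 2)).
  by congr expR; ring.
split.
  have H := @hoeffding R Y (W 0) (fun y => APP W y 0) n (eps * mu W) (W0 0) (W1 0)
    (fun y => APP_ge0 y 0) (fun y => APP_le1 y 0) d0.
  apply: le_trans H; rewrite /prob0; apply: prob_mono => // y.
  rewrite frob_zero mu_eq1 => h; apply: (le_trans h); apply: eqle; ring.
have H := @hoeffding R Y (W 0) (fun y => 1 - sqn y) n (eps * mu W) (W0 0) (W1 0)
  (fun y => ltac:(rewrite subr_ge0; exact: sqn_le1))
  (fun y => ltac:(rewrite lerBlDr lerDl; exact: sqn_ge0)) d0.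
apply: le_trans H; rewrite /prob0; apply: prob_mono => // y.
rewrite frob_self => h.
have -> : \sum_y0 W 0 y0 * (1 - sqn y0) = 1 - mu W.
  under eq_bigr => z _ do rewrite mulrBr mulr1.
  by rewrite sumrB W1 mu_eq2.
rewrite sumrB sumr_const card_ord.
move: h; rewrite -mulr_natl mulr1 => h.
have e : n%:R * (1 - mu W) - n%:R * (eps * mu W) = n%:R - (1 + eps) * n%:R * mu W by ring.
by rewrite e lerD2l lerN2.
Qed.

End Chan.

Theorem lemma2 (R : realType) (F : finFieldType) (Y : finType)
  (W : F -> Y -> R) (n : nat) (eps : R) :
  is_dmc W -> weakly_symmetric W -> 0 < eps ->
  prob0 W (fun y : {ffun 'I_n -> Y} => frob (relmat W y) (@zero_floor R F n) <= (1 - eps) * mu W * n%:R)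
    <= expR (- (2 * n%:R * mu W ^+ 2 * eps ^+ 2))
  /\
  prob0 W (fun y : {ffun 'I_n -> Y} => frob (relmat W y) (relmat W y) >= (1 + eps) * n%:R * mu W)
    <= expR (- (2 * n%:R * mu W ^+ 2 * eps ^+ 2)).
Proof.
move=> [W0 W1] [P [Ppart Pblk]] eps0.
exact: (@main_sec R F Y W W0 W1 P Ppart (fun B PB => (Pblk B PB).1) (fun B PB => (Pblk B PB).2) n eps eps0).
Qed.
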